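(* $\frac{11n}{9}+o(n)\le\mathrm{sat}_\circlearrowright(n,M_2)\le 3n+o(n)$.
   Context: $\Omega_n=\{v_0,\dots,v_{n-1}\}$ with cyclic order $v_0<\dots<v_{n-1}<v_0$ (indices mod $n$). A $3$-cgh on $\Omega_n$ is a family of $3$-subsets of $\Omega_n$. For a $3$-cgh $F$, $H$ contains a copy of $F$ if there is an injection of the vertex set of $F$ into $\Omega_n$ preserving the cyclic order and mapping every edge of $F$ to an edge of $H$. $H$ is $F$-saturated if it contains no copy of $F$ but $H\cup\{e\}$ does for every $e\in\binom{\Omega_n}{3}\setminus H$; $\mathrm{sat}_\circlearrowright(n,F)$ is the minimum number of edges of an $F$-saturated $3$-cgh on $\Omega_n$. $M_2$ is the $3$-cgh on $\Omega_6$ with edges $\{v_0,v_1,v_3\}$ and $\{v_2,v_4,v_5\}$. *)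

(* Defs.v *)
From mathcomp Require Import all_boot all_order all_algebra.
Set Implicit Arguments. Unset Strict Implicit. Unset Printing Implicit Defensive.

(* A 3-cgh on Omega_n = 'I_n (vertex v_i is i; cyclic order 0 < 1 < ... < n-1 < 0). *)
Definition is_3cgh (n : nat) (H : {set {set 'I_n}}) : bool :=
  [forall e in H, #|e| == 3].

(* phi : 'I_m -> 'I_n preserves the cyclic order: after rotating Omega_n so
   that some vertex r becomes the first one, phi is strictly increasing.
   (This implies injectivity.) *)
Definition cyc_order_preserving (m n : nat) (phi : 'I_m -> 'I_n) : bool :=
  [exists r : 'I_n, forall i : 'I_m, forall j : 'I_m, (i < j)%N ==>
    ((phi i + n - r) %% n < (phi j + n - r) %% n)%N].

Definition contains_copy (m n : nat) (H : {set {set 'I_n}}) (F : {set {set 'I_m}}) : bool :=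
  [exists phi : {ffun 'I_m -> 'I_n},
    [&& injectiveb phi, cyc_order_preserving phi &
        [forall e in F, phi @: e \in H]]].

Definition saturated (m n : nat) (F : {set {set 'I_m}}) (H : {set {set 'I_n}}) : bool :=
  [&& is_3cgh H, ~~ contains_copy H F &
  [forall e : {set 'I_n}, (#|e| == 3) ==> (e \notin H) ==> contains_copy (e |: H) F]].

(* sat(n,F): the minimum number of edges of an F-saturated 3-cgh on Omega_n.
   (An F-saturated 3-cgh always exists: take a maximal F-free 3-cgh; every
   3-cgh has at most 'C(n,3) edges, so 'C(n,3) is a harmless neutral value.) *)
Definition sat (m : nat) (F : {set {set 'I_m}}) (n : nat) : nat :=
  \big[minn/'C(n, 3)]_(H : {set {set 'I_n}} | saturated F H) #|H|.

Definition M2 : {set {set 'I_6}} :=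
  [set [set (inord 0 : 'I_6); inord 1; inord 3]; [set (inord 2 : 'I_6); inord 4; inord 5]].

(* Main.v *)
Require Import Defs.
From mathcomp Require Import all_boot all_order all_algebra.
From mathcomp Require Import zify lra.
Set Implicit Arguments. Unset Strict Implicit. Unset Printing Implicit Defensive.

Lemma mod_sub a n : n <= a < 2 * n -> a %% n = a - n.
Proof.
move=> h. have -> : a = (a - n) + n by rewrite subnK //; lia.
rewrite modnDr modn_small //; lia.
Qed.

Lemma modrel p r s n : p < n -> r < n -> s < n ->
  (p + n - s) %% n = ((p + n - r) %% n + (r + n - s) %% n) %% n.
Proof.
move=> hp hr hs. rewrite modnDm.
have -> : p + n - r + (r + n - s) = (p + n - s) + n by lia.
by rewrite modnDr.
Qed.

Ltac splitmod a n :=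
  let h := fresh "h" in
  case: (ltnP a n) => h; [rewrite (modn_small h) | rewrite (@mod_sub a n) ?h; [|lia]].

Lemma core1 (n y0 y1 y2 y3 y4 y5 t len : nat) :
  y0 < y1 -> y1 < y2 -> y2 < y3 -> y3 < y4 -> y4 < y5 -> y5 < n -> t < n ->
  (y2 + t) %% n < len -> (y4 + t) %% n < len -> (y5 + t) %% n < len ->
  ((y0 + t) %% n < len) || ((y1 + t) %% n < len) || ((y3 + t) %% n < len).
Proof.
move=> ? ? ? ? ? ? ?.
splitmod (y0 + t) n; splitmod (y1 + t) n; splitmod (y2 + t) n; splitmod (y3 + t) n; splitmod (y4 + t) n; splitmod (y5 + t) n; lia.
Qed.

Lemma core2 (n y0 y1 y2 y3 y4 y5 t len : nat) :
  y0 < y1 -> y1 < y2 -> y2 < y3 -> y3 < y4 -> y4 < y5 -> y5 < n -> t < n ->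
  (y0 + t) %% n < len -> (y1 + t) %% n < len -> (y3 + t) %% n < len ->
  ((y2 + t) %% n < len) || ((y4 + t) %% n < len) || ((y5 + t) %% n < len).
Proof.
move=> ? ? ? ? ? ? ?.
splitmod (y0 + t) n; splitmod (y1 + t) n; splitmod (y2 + t) n; splitmod (y3 + t) n; splitmod (y4 + t) n; splitmod (y5 + t) n; lia.
Qed.

Lemma imset3 (T U : finType) (f : T -> U) a b c : f @: [set a; b; c] = [set f a; f b; f c].
Proof. by rewrite !imsetU !imset_set1. Qed.

Lemma in3_1 (T : finType) (a b c : T) : a \in [set a; b; c]. Proof. by rewrite !inE eqxx. Qed.
Lemma in3_2 (T : finType) (a b c : T) : b \in [set a; b; c]. Proof. by rewrite !inE eqxx orbT. Qed.
Lemma in3_3 (T : finType) (a b c : T) : c \in [set a; b; c]. Proof. by rewrite !inE eqxx !orbT. Qed.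

Lemma disjP (T : finType) (A B : {set T}) :
  reflect (forall x, x \in A -> x \in B -> False) [disjoint A & B].
Proof.
rewrite -setI_eq0; apply: (iffP eqP) => [h x xa xb | h].
  have : x \in A :&: B by rewrite inE xa xb.
  by rewrite h inE.
apply/setP => x; rewrite !inE; apply/negP => /andP [xa xb]; exact: h x xa xb.
Qed.

Lemma in3P (T : finType) (a b c x : T) : x \in [set a; b; c] -> [\/ x = a, x = b | x = c].
Proof. by rewrite !inE => /orP [/orP [] | ] /eqP ->; [apply: Or31 | apply: Or32 | apply: Or33]. Qed.

Lemma disj3 (T : finType) (a b c : T) (B : {set T}) :
  [disjoint [set a; b; c] & B] = [&& a \notin B, b \notin B & c \notin B].
Proof.
apply/disjP/and3P => [h|[ha hb hc] x].
  by split; apply/negP => /h; apply; rewrite !inE eqxx ?orbT.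
by move=> /in3P [] ->; apply/negP.
Qed.

Section S.
Variable m : nat.
Local Notation n := m.+1.

Definition vx (k : nat) : 'I_n := inord (k %% n).
Lemma val_vx k : (vx k : nat) = k %% n.
Proof. by rewrite /vx inordK // ltn_pmod. Qed.
Lemma eq_vx (x : 'I_n) k : (x == vx k) = (val x == k %% n).
Proof. by rewrite -val_eqE /= val_vx. Qed.

Definition inarc (s len : nat) (x : 'I_n) := (x + n - s) %% n < len.
Definition sepb (X Y : {set 'I_n}) := exists s len, s < n /\
  (forall x, x \in X -> inarc s len x) /\ (forall y, y \in Y -> ~~ inarc s len y).

Definition psi (r : nat) (x : 'I_n) := (x + n - r) %% n.

Definition is_copy (G : {set {set 'I_n}}) (p0 p1 p2 p3 p4 p5 : 'I_n) :=
  exists r, r < n /\ psi r p0 < psi r p1 /\ psi r p1 < psi r p2 /\ psi r p2 < psi r p3 /\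
    psi r p3 < psi r p4 /\ psi r p4 < psi r p5 /\
    [set p0; p1; p3] \in G /\ [set p2; p4; p5] \in G.

Lemma psi_lt r x : psi r x < n.
Proof. by rewrite ltn_pmod. Qed.

Lemma i6 k : k < 6 -> ((inord k : 'I_6) : nat) = k.
Proof. exact: inordK. Qed.

Lemma contains_copyP G :
  contains_copy G M2 <-> exists p0 p1 p2 p3 p4 p5, is_copy G p0 p1 p2 p3 p4 p5.
Proof.
split.
- case/existsP => phi /and3P [_ /existsP [r /forallP hr] /forallP hG].
  exists (phi (inord 0)), (phi (inord 1)), (phi (inord 2)), (phi (inord 3)), (phi (inord 4)), (phi (inord 5)).
  have hl : forall a b, a < b -> b < 6 -> psi r (phi (inord a)) < psi r (phi (inord b)).
    move=> a b hab hb; move: (hr (inord a)) => /forallP /(_ (inord b)) /implyP; apply.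
    by rewrite !i6 //; lia.
  exists r; split; first exact: ltn_ord.
  do 5! (split; first by apply: hl).
  split.
  + have := hG [set inord 0; inord 1; inord 3]; rewrite imset3 !inE eqxx /=; apply.
  + have := hG [set inord 2; inord 4; inord 5]; rewrite imset3 !inE eqxx orbT /=; apply.
- case=> p0 [p1 [p2 [p3 [p4 [p5 [r [hr [h01 [h12 [h23 [h34 [h45 [hA hB]]]]]]]]]]]]].
  pose phi := [ffun i : 'I_6 => nth p0 [:: p0; p1; p2; p3; p4; p5] i].
  have hphi : forall (i j : 'I_6), i < j -> psi r (phi i) < psi r (phi j).
    move=> [[|[|[|[|[|[|i]]]]]] Hi] [[|[|[|[|[|[|j]]]]]] Hj] //= hij; rewrite !ffunE /=; lia.
  have ph : forall k, k < 6 -> phi (inord k) = nth p0 [:: p0; p1; p2; p3; p4; p5] k.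
    by move=> k hk; rewrite ffunE i6.
  apply/existsP; exists phi; apply/and3P; split.
  + apply/injectiveP => i j hij; apply/eqP; case: (ltngtP i j) => [h|h|h].
    * by have := hphi _ _ h; rewrite hij ltnn.
    * by have := hphi _ _ h; rewrite hij ltnn.
    * by apply/eqP; apply: val_inj.
  + apply/existsP; exists (Ordinal hr); apply/forallP => i; apply/forallP => j; apply/implyP => hij.
    exact: hphi.
  + apply/forallP => e; apply/implyP; rewrite !inE => /orP [] /eqP ->; rewrite imset3 !ph //.
Qed.

Lemma copy_nosep G p0 p1 p2 p3 p4 p5 : is_copy G p0 p1 p2 p3 p4 p5 ->
  ~ sepb [set p2; p4; p5] [set p0; p1; p3] /\ ~ sepb [set p0; p1; p3] [set p2; p4; p5].
Proof.
case=> r [hr [h01 [h12 [h23 [h34 [h45 _]]]]]].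
split.
- case=> s [len [hs [hX hY]]].
  have E x : inarc s len x = ((psi r x + (r + n - s) %% n) %% n < len).
    by rewrite /inarc /psi -modrel.
  have := @core1 n _ _ _ _ _ _ _ len h01 h12 h23 h34 h45 (psi_lt r p5) (ltn_pmod (r + n - s) (ltn0Sn m)).
  rewrite -!E.
  rewrite (hX p2) ?(hX p4) ?(hX p5) ?inE ?eqxx ?orbT //.
  by rewrite (negbTE (hY p0 (@in3_1 _ _ _ _))) (negbTE (hY p1 (@in3_2 _ _ _ _))) (negbTE (hY p3 (@in3_3 _ _ _ _))) => /(_ isT isT isT).
- case=> s [len [hs [hX hY]]].
  have E x : inarc s len x = ((psi r x + (r + n - s) %% n) %% n < len).
    by rewrite /inarc /psi -modrel.
  have := @core2 n _ _ _ _ _ _ _ len h01 h12 h23 h34 h45 (psi_lt r p5) (ltn_pmod (r + n - s) (ltn0Sn m)).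
  rewrite -!E.
  rewrite (hX p0) ?(hX p1) ?(hX p3) ?inE ?eqxx ?orbT //.
  by rewrite (negbTE (hY p2 (@in3_1 _ _ _ _))) (negbTE (hY p4 (@in3_2 _ _ _ _))) (negbTE (hY p5 (@in3_3 _ _ _ _))) => /(_ isT isT isT).
Qed.

Lemma copy_disj G p0 p1 p2 p3 p4 p5 : is_copy G p0 p1 p2 p3 p4 p5 ->
  [disjoint [set p0; p1; p3] & [set p2; p4; p5]].
Proof.
case=> r [hr [h01 [h12 [h23 [h34 [h45 _]]]]]].
rewrite disj3; apply/and3P; split; apply/negP => /in3P [] e;
  move: h01 h12 h23 h34 h45; rewrite e; lia.
Qed.

Lemma sat_wit (H : {set {set 'I_n}}) (e : {set 'I_n}) : saturated M2 H -> #|e| == 3 -> e \notin H ->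
  exists f, f \in H /\ [disjoint e & f] /\ ~ sepb e f /\ ~ sepb f e.
Proof.
case/and3P => _ hfree /forallP /(_ e) hs he3 heH.
move: hs; rewrite he3 heH /= => /contains_copyP [p0 [p1 [p2 [p3 [p4 [p5 hc]]]]]].
have hd := copy_disj hc; have [hn1 hn2] := copy_nosep hc.
case: (hc) => r [hr [h01 [h12 [h23 [h34 [h45 [hA hB]]]]]]].
move: hA hB; rewrite !in_setU1.
case: eqP => [hAe _|_ hA].
  case: eqP => [hBe|_ hB].
    have hp : p0 \in [set p2; p4; p5] by rewrite hBe -hAe in3_1.
    by move/disjP: hd => /(_ p0 (@in3_1 _ _ _ _) hp).
  exists [set p2; p4; p5]; rewrite -hAe; do !split => //.
case: eqP => [hBe _|_ hB].
  exists [set p0; p1; p3]; rewrite -hBe disjoint_sym; do !split => //.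
case/negP: hfree; apply/contains_copyP; exists p0, p1, p2, p3, p4, p5, r.
by do !split.
Qed.
End S.


Ltac splitmods :=
  repeat match goal with |- context [?a %% ?n] =>
    lazymatch a with context [_ %% _] => fail | _ =>
    let h := fresh "hm" in
    case: (ltnP a n) => h;
    [rewrite (modn_small h) |
     let h2 := fresh "hm" in case: (ltnP a (2 * n)) => h2;
     [rewrite (@mod_sub a n (introT andP (conj h h2))) | intros; exfalso; lia]]
    end end.

Section U.
Variable m : nat.
Local Notation n := m.+1.
Hypothesis hn : 7 <= m.
Local Notation vx := (@vx m).

Lemma vx_val (x : 'I_n) : vx x = x.
Proof. by apply: val_inj; rewrite /= val_vx modn_small. Qed.

Lemma val_vx' k : val (vx k) = k %% n.
Proof. exact: val_vx. Qed.

Lemma vx_eq a b : (vx a == vx b :> 'I_n) = (a %% n == b %% n).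
Proof. by rewrite eq_vx val_vx'. Qed.


Definition Tn i : {set 'I_n} := [set vx i; vx i.+1; vx i.+2].
Definition Fn i : {set 'I_n} := [set vx 0; vx i; vx i.+1].
Definition Pn i : {set 'I_n} := [set vx i; vx i.+1; vx (i + 3)].
Definition E0 : {set 'I_n} := [set vx 0; vx 2; vx 4].
Definition Hc : {set {set 'I_n}} :=
  [set Tn i | i : 'I_n] :|: [set Fn i | i : 'I_n & (0 < i) && (i.+1 < n)]
  :|: [set Pn i | i : 'I_n & i.+2 != n] :|: [set E0].

Lemma card_Hc : #|Hc| <= 3 * n + 1.
Proof.
rewrite /Hc; apply: (leq_trans (leq_of_leqif (leq_card_setU _ _))); rewrite cards1 leq_add2r.
apply: (leq_trans (leq_of_leqif (leq_card_setU _ _))); rewrite mulSn mulSn mul1n.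
rewrite addnA; apply: leq_add; last by apply: (leq_trans (leq_imset_card _ _)); apply: (leq_trans (max_card _)); rewrite card_ord.
apply: (leq_trans (leq_of_leqif (leq_card_setU _ _))); apply: leq_add.
  by apply: (leq_trans (leq_imset_card _ _)); apply: (leq_trans (max_card _)); rewrite card_ord.
by apply: (leq_trans (leq_imset_card _ _)); apply: (leq_trans (max_card _)); rewrite card_ord.
Qed.

Lemma inHcT i : i < n -> Tn i \in Hc.
Proof. by move=> h; rewrite !inE; apply/orP; left; apply/orP; left; apply/orP; left; apply/imsetP; exists (Ordinal h). Qed.
Lemma inHcF i : 0 < i -> i.+1 < n -> Fn i \in Hc.
Proof.
move=> h0 h; rewrite !inE; apply/orP; left; apply/orP; left; apply/orP; right; apply/imsetP.
by exists (Ordinal (ltnW h)); rewrite // inE /= h0 h.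
Qed.
Lemma inHcP i : i < n -> i.+2 != n -> Pn i \in Hc.
Proof.
move=> h h2; rewrite !inE; apply/orP; left; apply/orP; right; apply/imsetP.
by exists (Ordinal h); rewrite // inE /= h2.
Qed.
Lemma inHcE : E0 \in Hc.
Proof. by rewrite !inE eqxx orbT. Qed.

Lemma Hc_cases X : X \in Hc -> [\/ exists2 i, i < n & X = Tn i,
   exists i, [/\ 0 < i, i.+1 < n & X = Fn i],
   (exists i, [/\ i < n, i.+2 != n & X = Pn i]) | X = E0].
Proof.
rewrite !inE => /orP [/orP [/orP [] | ] | ].
- by case/imsetP => i _ ->; apply: Or41; exists i.
- by case/imsetP => i; rewrite inE => /andP [h1 h2] ->; apply: Or42; exists i.
- by case/imsetP => i; rewrite inE => h2 ->; apply: Or43; exists i.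
- by move/eqP ->; apply: Or44.
Qed.

Lemma card3 (T : finType) (a b c : T) : a != b -> a != c -> b != c -> #|[set a; b; c]| = 3.
Proof.
move=> hab hac hbc; rewrite -setUA cardsU1 !inE negb_or hab hac /=.
by rewrite -[[set b] :|: [set c]]/([set b; c]) cards2 hbc.
Qed.

Lemma Hc_3cgh : is_3cgh Hc.
Proof.
apply/forallP => X; apply/implyP => /Hc_cases [[i hi ->]|[i [h0 h1 ->]]|[i [hi h2 ->]]| ->];
  rewrite card3 // !vx_eq; splitmods; lia.
Qed.


Lemma eq_vx' (x : 'I_n) k : (x == vx k) = ((x : nat) == k %% n).
Proof. exact: eq_vx. Qed.

Lemma val_lt (x : 'I_n) : (x : nat) < n. Proof. exact: ltn_ord. Qed.

Lemma sepT j (Y : {set 'I_n}) : j < n -> [disjoint Tn j & Y] -> sepb (Tn j) Y.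
Proof.
move=> hj hd; exists j, 3; split => //; split.
- move=> x /in3P [] ->; rewrite /inarc val_vx; splitmods; lia.
- move=> y hy; apply/negP => hin; move/disjP: hd => /(_ y); apply => //.
  rewrite !inE !eq_vx'; move: hin (val_lt y); rewrite /inarc; splitmods; lia.
Qed.

Lemma sepPn x (Y : {set 'I_n}) : x < n -> [disjoint Pn x & Y] -> vx (x + 2) \notin Y -> sepb (Pn x) Y.
Proof.
move=> hx hd hm; exists x, 4; split => //; split.
- move=> z /in3P [] ->; rewrite /inarc val_vx; splitmods; lia.
- move=> y hy; apply/negP => hin.
  have : (y == vx (x + 2)) || (y \in Pn x).
    rewrite !inE !eq_vx'; move: hin (val_lt y); rewrite /inarc; splitmods; lia.
  case/orP => [/eqP e|hy2]; first by rewrite -e hy in hm.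
  by move/disjP: hd => /(_ y hy2 hy).
Qed.

Lemma notin3 (T : finType) (x a b c : T) : x \notin [set a; b; c] -> [/\ x <> a, x <> b & x <> c].
Proof. by rewrite !inE !negb_or => /andP [/andP [/eqP ? /eqP ?] /eqP ?]. Qed.

Lemma vx_eqP a b : vx a = vx b -> a %% n = b %% n.
Proof. by move/eqP; rewrite vx_eq => /eqP. Qed.
Lemma vx_neq a b : vx a <> vx b -> a %% n <> b %% n.
Proof. by move=> h e; apply: h; apply/eqP; rewrite vx_eq e. Qed.

Lemma vx_shift a b c d : a + d = b + c -> vx a = vx b -> vx c = vx d.
Proof.
move=> e /vx_eqP h; apply: val_inj; rewrite /= !val_vx.
apply/eqP; rewrite -(eqn_modDl b) -e eqn_modDr; exact/eqP.
Qed.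

Ltac shift_solve hm :=
  match goal with H : vx _ <> vx _ |- _ =>
    apply: H; first [ apply: (vx_shift _ hm); lia | apply: (vx_shift _ (esym hm)); lia
                    | symmetry; apply: (vx_shift _ hm); lia | symmetry; apply: (vx_shift _ (esym hm)); lia ]
  end.

Ltac vxprop :=
  repeat match goal with
  | H : vx _ = vx _ |- _ => move/vx_eqP: H => H
  | H : vx _ <> vx _ |- _ => move/vx_neq: H => H
  end;
  idtac.

Ltac revert_mods := repeat match goal with H : context [_ %% _] |- _ => revert H end.
Ltac clear_diseqs := repeat match goal with H : _ <> _ |- _ => clear H end.
Ltac solve_one :=
  match goal with H : _ <> _ |- _ =>
    move: H; clear_diseqs; revert_mods; splitmods; lia
  end.

Lemma mid_notin x (Y : {set 'I_n}) : x < n -> x.+2 != n -> Y \in Hc -> [disjoint Pn x & Y] -> vx (x + 2) \notin Y.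
Proof.
move=> hx hx2 hY hd; apply/negP => hm; move: hd; rewrite /Pn disj3.
case: (Hc_cases hY) hm => [[i hi ->]|[i [h0 h1 ->]]|[i [hi h2 ->]]| ->] /in3P hm
  /and3P [/notin3 [a1 a2 a3] /notin3 [b1 b2 b3] /notin3 [c1 c2 c3]];
  case: hm => hm; first [ shift_solve hm | move/vx_eqP: hm; move: hx2; clear_diseqs; splitmods; lia ].
Qed.

Lemma Hc_sep (A B : {set 'I_n}) : A \in Hc -> B \in Hc -> [disjoint A & B] -> sepb A B \/ sepb B A.
Proof.
move=> hA hB hd.
case: (Hc_cases hA) => [[i hi eA]|[i [h0 h1 eA]]|[i [hi h2 eA]]| eA].
- by left; rewrite eA; apply: sepT => //; rewrite -eA.
- case: (Hc_cases hB) => [[j hj eB]|[j [j0 j1 eB]]|[j [hj j2 eB]]| eB].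
  + by right; rewrite eB; apply: sepT => //; rewrite -eB disjoint_sym.
  + by move/disjP: hd => /(_ (vx 0)); rewrite eA eB !in3_1 => /(_ isT isT).
  + right; rewrite eB; apply: sepPn => //; first by rewrite -eB disjoint_sym.
    by apply: mid_notin => //; rewrite -eB disjoint_sym.
  + by move/disjP: hd => /(_ (vx 0)); rewrite eA eB !in3_1 => /(_ isT isT).
- left; rewrite eA; apply: sepPn => //; first by rewrite -eA.
  by apply: mid_notin => //; rewrite -eA.
- case: (Hc_cases hB) => [[j hj eB]|[j [j0 j1 eB]]|[j [hj j2 eB]]| eB].
  + by right; rewrite eB; apply: sepT => //; rewrite -eB disjoint_sym.
  + by move/disjP: hd => /(_ (vx 0)); rewrite eA eB !in3_1 => /(_ isT isT).
  + right; rewrite eB; apply: sepPn => //; first by rewrite -eB disjoint_sym.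
    by apply: mid_notin => //; rewrite -eB disjoint_sym.
  + by move/disjP: hd => /(_ (vx 0)); rewrite eA eB !in3_1 => /(_ isT isT).
Qed.

Lemma Hc_free : ~~ contains_copy Hc M2.
Proof.
apply/negP => /contains_copyP [p0 [p1 [p2 [p3 [p4 [p5 hc]]]]]].
have hd := copy_disj hc; have [hn1 hn2] := copy_nosep hc.
case: (hc) => r [_ [_ [_ [_ [_ [_ [hA hB]]]]]]].
by case: (Hc_sep hA hB hd).
Qed.

Lemma test a b : a < n -> b < n -> a + 2 = b + n -> vx (a + 3) = vx (b.+1).
Proof.
move=> ha hb e; apply/eqP; rewrite vx_eq; move: ha hb e; splitmods; lia.
Qed.
End U.


Ltac perm_set := apply/setP => w; rewrite !inE; do ![case: (_ == _)].

Section U2.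
Variable m : nat.
Local Notation n := m.+1.
Local Notation vx := (@vx m).
Local Notation Hc := (@Hc m).
Local Notation Tn := (@Tn m).
Local Notation Fn := (@Fn m).
Local Notation Pn := (@Pn m).
Hypothesis hn : 7 <= m.

Lemma mkcopy (G : {set {set 'I_n}}) r a0 a1 a2 a3 a4 a5 : r < n ->
  psi r (vx a0) < psi r (vx a1) -> psi r (vx a1) < psi r (vx a2) ->
  psi r (vx a2) < psi r (vx a3) -> psi r (vx a3) < psi r (vx a4) ->
  psi r (vx a4) < psi r (vx a5) ->
  [set vx a0; vx a1; vx a3] \in G -> [set vx a2; vx a4; vx a5] \in G -> contains_copy G M2.
Proof.
move=> hr h1 h2 h3 h4 h5 hA hB; apply/contains_copyP.
by exists (vx a0), (vx a1), (vx a2), (vx a3), (vx a4), (vx a5), r.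
Qed.

Lemma e3 (e : {set 'I_n}) : #|e| == 3 ->
  exists a b c, [/\ a < b, b < c, c < n & e = [set vx a; vx b; vx c]].
Proof.
move=> /eqP he.
have [x hx] : exists x, x \in e by apply/card_gt0P; rewrite he.
have : #|e :\ x| == 2 by move: he; rewrite (cardsD1 x e) hx add1n => [[->]].
case/cards2P => y [z [hyz e2]].
have ee : e = [set x; y; z] by rewrite -setUA -[[set y] :|: _]/([set y; z]) -e2 setD1K.
have hxy : x != y by apply/eqP => exy; move: (setD11 x e); rewrite e2 exy !inE eqxx.
have hxz : x != z by apply/eqP => exy; move: (setD11 x e); rewrite e2 exy !inE eqxx orbT.
rewrite ee -(vx_val x) -(vx_val y) -(vx_val z).
have nv : forall u v : 'I_n, u != v -> (u : nat) != v by move=> u v; apply: contra => /eqP /val_inj ->.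
move: (nv _ _ hxy) (nv _ _ hxz) (nv _ _ hyz) (val_lt x) (val_lt y) (val_lt z).
move: (x : nat) (y : nat) (z : nat) => {ee e2 hx hxy hxz hyz x y z} x y z.
move=> hxy hxz hyz hx hy hz.
case: (ltngtP x y) => [xy|yx|exy]; last by rewrite exy eqxx in hxy.
- case: (ltngtP y z) => [yz|zy|eyz]; last by rewrite eyz eqxx in hyz.
  + by exists x, y, z.
  + case: (ltngtP x z) => [xz|zx|exz]; last by rewrite exz eqxx in hxz.
    * by exists x, z, y; split => //; perm_set.
    * by exists z, x, y; split => //; perm_set.
- case: (ltngtP x z) => [xz|zx|exz]; last by rewrite exz eqxx in hxz.
  + by exists y, x, z; split => //; perm_set.
  + case: (ltngtP y z) => [yz|zy|eyz]; last by rewrite eyz eqxx in hyz.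
    * by exists y, z, x; split => //; perm_set.
    * by exists z, y, x; split => //; perm_set.
Qed.


Lemma in_e (e S : {set 'I_n}) (G : {set {set 'I_n}}) : S = e -> S \in e |: G.
Proof. by move=> ->; rewrite setU11. Qed.
Lemma in_G (e S : {set 'I_n}) (G : {set {set 'I_n}}) : S \in G -> S \in e |: G.
Proof. by move=> h; rewrite setU1r. Qed.

Ltac psi_tac := rewrite /psi !val_vx; splitmods; lia.

Lemma vxE a b : a %% n = b %% n -> vx a = vx b.
Proof. by move=> h; apply: val_inj; rewrite /= !val_vx. Qed.

Lemma sat_cases a b c : a < b -> b < c -> c < n -> [set vx a; vx b; vx c] \notin Hc ->
  contains_copy ([set vx a; vx b; vx c] |: Hc) M2.
Proof.
move=> hab hbc hc hnot.
case: (posnP a) => [a0|apos].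
- subst a.
  have [hiv|hiv] := boolP ((2 < b) && (b.+1 < c)).
    move/andP: hiv => [h1 h2].
    apply: (@mkcopy _ (b - 2) (b - 2) (b - 2).+1 b ((b - 2) + 3) c 0); try lia; try psi_tac.
    + by apply: in_G; apply: inHcP; lia.
    + by apply: in_e; perm_set.
  have [hv|hv] := boolP ((b.+2 < c) && (c.+2 <= n)).
    move/andP: hv => [h1 h2].
    apply: (@mkcopy _ (c - 2) (c - 2) (c - 2).+1 c ((c - 2) + 3) 0 b); try lia; try psi_tac.
    + by apply: in_G; apply: inHcP; lia.
    + by apply: in_e; perm_set.
  exfalso; move/negP: hnot; apply.
  have : c = b.+1 \/ (b = 1 /\ c = 3) \/ (b = 2 /\ c = 4) \/ (b = 1 /\ c = m) \/ (b = 2 /\ c = m).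
    move: hiv hv; lia.
  case=> [->|[[-> ->]|[[-> ->]|[[-> ->]|[-> ->]]]]].
  + by apply: inHcF; lia.
  + by apply: (@inHcP m 0); lia.
  + exact: inHcE.
  + have -> : [set vx 0; vx 1; vx m] = Tn m.
      have e1 : vx m.+1 = vx 0 by apply: vxE; splitmods; lia.
      have e2 : vx m.+2 = vx 1 by apply: vxE; splitmods; lia.
      by rewrite /Tn e1 e2; perm_set.
    by apply: inHcT.
  + have -> : [set vx 0; vx 2; vx m] = Pn m.
      have e1 : vx m.+1 = vx 0 by apply: vxE; splitmods; lia.
      have e2 : vx (m + 3) = vx 2 by apply: vxE; splitmods; lia.
      by rewrite /Pn e1 e2; perm_set.
    by apply: inHcP; rewrite // neq_ltn ltnSn orbT.
- have [hi|hi] := boolP (a.+2 < b).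
    apply: (@mkcopy _ b b c 0 a a.+1 a.+2); try lia; try psi_tac.
    + by apply: in_e; perm_set.
    + by apply: in_G; apply: inHcF; lia.
  have [hii|hii] := boolP (b.+2 < c).
    apply: (@mkcopy _ b.+1 b.+1 b.+2 c 0 a b); try lia; try psi_tac.
    + apply: in_G; rewrite (_ : [set vx b.+1; vx b.+2; vx 0] = Fn b.+1); last by rewrite /Fn; perm_set.
      by apply: inHcF; lia.
    + by apply: in_e; perm_set.
  have : (b = a.+1 /\ c = a.+2) \/ (b = a.+1 /\ c = a + 3) \/ (b = a.+2 /\ 2 <= a) \/ (b = 3 /\ a = 1).
    move: hi hii; lia.
  case=> [[? ?]|[[? ?]|[[eb ha]|[eb ea]]]]; try subst b c.
  + by case/negP: hnot; apply: (@inHcT m a); lia.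
  + by case/negP: hnot; apply: (@inHcP m a); lia.
  + apply: (@mkcopy _ 0 (a - 2) (a - 2).+1 a ((a - 2) + 3) b c); try lia; try psi_tac.
    + by apply: in_G; apply: inHcP; lia.
    + by apply: in_e.
  + subst a b.
    apply: (@mkcopy _ m m m.+1 1 (m + 3) 3 c); try lia; try psi_tac.
    + by apply: in_G; apply: inHcP; rewrite // neq_ltn ltnSn orbT.
    + by apply: in_e.
Qed.

Lemma Hc_sat : saturated M2 Hc.
Proof.
apply/and3P; split; [exact: Hc_3cgh | exact: Hc_free |].
apply/forallP => e; apply/implyP => he; apply/implyP => hnot.
case: (e3 he) => a [b [c [hab hbc hc ee]]]; subst e.
exact: sat_cases.
Qed.

End U2.


Section L.
Variable m : nat.
Local Notation n := m.+1.
Local Notation vx := (@vx m).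
Local Notation Tn := (@Tn m).
Hypothesis hn : 7 <= m.

Lemma vx_shiftN a b c d : a + d + n = b + c -> vx a = vx b -> vx c = vx d.
Proof.
move=> e /vx_eqP h; apply: val_inj; rewrite /= !val_vx.
apply/eqP; rewrite -(eqn_modDl b) -e modnDr eqn_modDr; exact/eqP.
Qed.
Lemma vx_shiftN' a b c d : a + d = b + c + n -> vx a = vx b -> vx c = vx d.
Proof.
move=> e h; symmetry; apply: (vx_shiftN _ (esym h)); lia.
Qed.

Ltac shift_solve2 hm :=
  match goal with H : vx _ <> vx _ |- _ =>
    apply: H; first [ apply: (vx_shift _ hm); lia | apply: (vx_shift _ (esym hm)); lia
                    | symmetry; apply: (vx_shift _ hm); lia | symmetry; apply: (vx_shift _ (esym hm)); lia
                    | apply: (vx_shiftN _ hm); lia | apply: (vx_shiftN _ (esym hm)); lia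
                    | symmetry; apply: (vx_shiftN _ hm); lia | symmetry; apply: (vx_shiftN _ (esym hm)); lia
                    | apply: (vx_shiftN' _ hm); lia | apply: (vx_shiftN' _ (esym hm)); lia
                    | symmetry; apply: (vx_shiftN' _ hm); lia | symmetry; apply: (vx_shiftN' _ (esym hm)); lia ]
  end.

Definition Dm (v : 'I_n) (b : bool) : {set 'I_n} :=
  if b then [set vx (v + n - 2); vx (v + n - 1); vx v.+1]
  else [set vx (v + n - 1); vx v.+1; vx v.+2].

Lemma card_Tn j : j < n -> #|Tn j| == 3.
Proof. by move=> hj; rewrite /Tn card3 // !vx_eq; splitmods; lia. Qed.

Lemma card_Dm v b : #|Dm v b| == 3.
Proof. by have hv := val_lt v; case: b; rewrite /Dm card3 // !vx_eq; splitmods; lia. Qed.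

Variable H : {set {set 'I_n}}.
Hypothesis hsat : saturated M2 H.

Lemma T_in j : j < n -> Tn j \in H.
Proof.
move=> hj; apply/negPn/negP => hT.
case: (sat_wit hsat (card_Tn hj) hT) => f [hf [hd [hn1 hn2]]].
by apply: hn1; apply: sepT.
Qed.

Definition Tset : {set {set 'I_n}} := [set Tn i | i : 'I_n].

Lemma Tn_inj : injective (fun i : 'I_n => Tn i).
Proof.
move=> i j /= e.
have h1 : vx i \in Tn j by rewrite -e in3_1.
have h2 : vx j \in Tn i by rewrite e in3_1.
apply: ord_inj; move: (val_lt i) (val_lt j).
case/in3P: h1 => /vx_eqP; case/in3P: h2 => /vx_eqP; splitmods; lia.
Qed.

Lemma card_Tset : #|Tset| = n.
Proof. by rewrite card_imset ?card_ord //; exact: Tn_inj. Qed.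

Lemma Tset_sub : Tset \subset H.
Proof. by apply/subsetP => X /imsetP [i _ ->]; apply: T_in. Qed.

Lemma Dm_notT v b : Dm v b \notin Tset.
Proof.
apply/negP => /imsetP [j _ e].
move: (val_lt v) (val_lt j); case: b e => /= e.
- have h1 : vx (v + n - 2) \in Tn j by rewrite -e in3_1.
  have h2 : vx v.+1 \in Tn j by rewrite -e in3_3.
  case/in3P: h1 => /vx_eqP; case/in3P: h2 => /vx_eqP; splitmods; lia.
- have h1 : vx (v + n - 1) \in Tn j by rewrite -e in3_1.
  have h2 : vx v.+2 \in Tn j by rewrite -e in3_3.
  case/in3P: h1 => /vx_eqP; case/in3P: h2 => /vx_eqP; splitmods; lia.
Qed.


Lemma ord_vx_neq (x : 'I_n) k : x <> vx k -> (x : nat) <> k %% n.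
Proof. by move=> h e; apply: h; apply: ord_inj; rewrite val_vx. Qed.

Lemma vin v b (f : {set 'I_n}) : [disjoint Dm v b & f] -> ~ sepb f (Dm v b) -> v \in f.
Proof.
move=> hd hns; apply/negPn/negP => hv; apply: hns.
have hvn := val_lt v.
exists ((v + (if b then 2 else 3)) %% n), (n - 4); split; first by rewrite ltn_pmod.
split.
- move=> x hx.
  have hxD : x \notin Dm v b by rewrite (disjointFl hd hx).
  have hxv : (x : nat) <> v by move=> e; move: hv; rewrite (_ : v = x) ?hx //; apply: ord_inj.
  have hxn := val_lt x.
  rewrite /inarc; case: b hd hxD => _ /= /notin3 [/ord_vx_neq h1 /ord_vx_neq h2 /ord_vx_neq h3];
    move: h1 h2 h3; splitmods; lia.
- move=> y; case: b hd => _ /in3P [] ->; rewrite /inarc val_vx; splitmods; lia.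
Qed.

Lemma wit_ex v b : Dm v b \notin H ->
  exists f, [&& f \in H :\: Tset, v \in f & [disjoint Dm v b & f]].
Proof.
move=> hD.
case: (sat_wit hsat (card_Dm v b) hD) => f [hf [hd [hn1 hn2]]].
have hv := vin hd hn2.
exists f; rewrite hv hd inE hf andbT andbT.

rewrite andbT; apply/negP; rewrite /Tset => /imsetP [j _ ej]; rewrite ej in hv hd.
move: hv; rewrite -(vx_val v) => /in3P hm.
clear hD hn1 hn2 hf; move: hd; rewrite /Dm; case: b => /=; rewrite disj3 => /and3P [/notin3 [a1 a2 a3] /notin3 [b1 b2 b3] /notin3 [c1 c2 c3]];
  case: hm => hm; shift_solve2 hm.
Qed.


Definition wit v b := odflt set0 [pick f | [&& f \in H :\: Tset, v \in f & [disjoint Dm v b & f]]].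

Lemma witP v b : Dm v b \notin H ->
  [&& wit v b \in H :\: Tset, v \in wit v b & [disjoint Dm v b & wit v b]].
Proof.
move=> hD; rewrite /wit; case: pickP => [f hf|h] //=.
by case: (wit_ex hD) => f hf; rewrite h in hf.
Qed.

Definition G (p : 'I_n * bool) : {set 'I_n} * 'I_n :=
  if Dm p.1 p.2 \in H then (Dm p.1 p.2, vx (p.1).+1) else (wit p.1 p.2, p.1).

Lemma G_in p : ((G p).1 \in H :\: Tset) && ((G p).2 \in (G p).1).
Proof.
case: p => v b; rewrite /G /=; case: ifP => hD /=.
  by rewrite inE hD andbT Dm_notT; case: b {hD}; rewrite /Dm ?in3_3 ?in3_2.
by case/and3P: (witP (negbT hD)) => -> ->.
Qed.

Lemma mixed_contra (v w : 'I_n) b : (w : nat) = v.+1 %% n -> [disjoint Dm w b & Dm v b] -> False.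
Proof.
move=> ew hd; have hv := val_lt v.
case: b hd => /= hd.
- have e : vx (w + n - 2) = vx (v + n - 1) by apply: vxE; rewrite ew; splitmods; lia.
  by move: (disjointFr hd (@in3_1 _ _ _ _)); rewrite e in3_2.
- have e : vx w.+1 = vx v.+2 by apply: vxE; rewrite ew; splitmods; lia.
  by move: (disjointFr hd (@in3_2 _ _ _ _)); rewrite e in3_3.
Qed.

Lemma G_inj : injective (fun p => (G p, p.2)).
Proof.
move=> [v b] [w c] /=; rewrite /G /=.
case: ifP => hv; case: ifP => hw; case=> e1 e2 e3; subst c.
- congr pair; apply: ord_inj; move/vx_eqP: e2; move: (val_lt v) (val_lt w); splitmods; lia.
- exfalso; case/and3P: (witP (negbT hw)) => _ _; rewrite -e1 -e2 => hd.
  by apply: (@mixed_contra v (vx v.+1) b) => //; rewrite val_vx.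
- exfalso; case/and3P: (witP (negbT hv)) => _ _; rewrite e1 e2 => hd.
  by apply: (@mixed_contra w (vx w.+1) b) => //; rewrite val_vx.
- by rewrite e2.
Qed.

Definition code (f : {set 'I_n}) (x : 'I_n) : 'I_3 := inord (index x (enum f)).

Lemma code_inj (f : {set 'I_n}) (x y : 'I_n) : #|f| = 3 -> x \in f -> y \in f -> code f x = code f y -> x = y.
Proof.
move=> hf hx hy.
have ix : index x (enum f) < 3 by rewrite -hf cardE index_mem mem_enum.
have iy : index y (enum f) < 3 by rewrite -hf cardE index_mem mem_enum.
move/(congr1 (fun i : 'I_3 => (i : nat))); rewrite /code !inordK // => e.
by rewrite -(nth_index x (_ : x \in enum f)) ?mem_enum // e nth_index ?mem_enum.
Qed.

Lemma H3 (f : {set 'I_n}) : f \in H -> #|f| = 3.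
Proof. by case/and3P: hsat => /forallP /(_ f) /implyP h _ _ /h /eqP. Qed.

Lemma lower : 4 * n <= 3 * #|H|.
Proof.
pose F (p : 'I_n * bool) := ((G p).1, code (G p).1 (G p).2, p.2).
have Finj : injective F.
  move=> p q [e1 e2 e3]; apply: G_inj => /=.
  case/andP: (G_in p) => /setDP [hp _] hp2; case/andP: (G_in q) => _ hq2.
  rewrite e3; congr pair; apply: injective_projections => //.
  apply: (code_inj (H3 hp) hp2); first by rewrite e1.
  by move: e2; rewrite -e1.
have hsub : F @: setT \subset setX (setX (H :\: Tset) [set: 'I_3]) [set: bool].
  apply/subsetP => z /imsetP [p _ ->]; rewrite !inE /= andbT.
  by case/andP: (G_in p); rewrite !inE andbT => ->.
have := subset_leq_card hsub; rewrite card_imset // !cardsX !cardsT card_bool card_ord card_prod card_ord card_bool.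
have hH := cardsID Tset H.
rewrite (setIidPr Tset_sub) card_Tset in hH.
move=> h; rewrite -hH; move: h; set k := #|H :\: Tset|; lia.
Qed.

End L.


Lemma bigmin_seq (I : eqType) (r : seq I) (P : pred I) (F : I -> nat) x i0 :
  i0 \in r -> P i0 -> \big[minn/x]_(i <- r | P i) F i <= F i0.
Proof.
elim: r => // a r IH; rewrite inE big_cons => /orP [/eqP <- | h] hP.
  by rewrite hP geq_minl.
case: (P a); last exact: IH.
exact: leq_trans (geq_minr _ _) (IH h hP).
Qed.

Lemma sat_bounds m : 7 <= m -> 4 * m.+1 <= 3 * sat M2 m.+1 /\ sat M2 m.+1 <= 3 * m.+1 + 1.
Proof.
move=> hm; split.
- rewrite /sat; apply: (big_ind (fun y => 4 * m.+1 <= 3 * y)).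
  + have := bin_ffact m.+1 3; rewrite !ffactnS ffactn0 /= => h.
    have : 3`! = 6 by []. move=> e; rewrite e in h. nia.
  + by move=> a b ha hb; rewrite /minn; case: ifP.
  + by move=> H hH; apply: lower.
- apply: leq_trans (card_Hc m).
  rewrite /sat; apply: bigmin_seq; first exact: mem_index_enum.
  exact: Hc_sat.
Qed.

Import Order.TTheory GRing.Theory Num.Theory.
Local Open Scope ring_scope.

Theorem propositionA5 :
  forall eps : rat, 0 < eps -> exists N : nat, forall n : nat, (N <= n)%N ->
    (11%:R / 9%:R - eps) * n%:R <= (sat M2 n)%:R /\
    (sat M2 n)%:R <= (3%:R + eps) * n%:R.
Proof.
move=> eps he.
have hi : 0 <= eps^-1 by rewrite invr_ge0 ltW.
have hb := archi_boundP hi.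
exists (maxn 8 (Num.bound eps^-1)) => n hn.
have hn8 : (8 <= n)%N by apply: leq_trans hn; rewrite leq_maxl.
have hnb : (Num.bound eps^-1 <= n)%N by apply: leq_trans hn; rewrite leq_maxr.
case: n hn hn8 hnb => [//|m] _ hm8 hnb.
have [h1 h2] := sat_bounds hm8.
have r1 : (4 * m.+1)%:R <= (3 * sat M2 m.+1)%:R :> rat by rewrite ler_nat.
have r2 : (sat M2 m.+1)%:R <= (3 * m.+1 + 1)%:R :> rat by rewrite ler_nat.
rewrite !natrM natrD in r1 r2.
have r3 : eps^-1 < m.+1%:R :> rat.
  apply: lt_le_trans hb _; by rewrite ler_nat.
have r4 : eps * eps^-1 = 1 by rewrite mulfV // gt_eqF.
have r5 : 0 <= (m.+1)%:R :> rat by [].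
split; nra.
Qed.
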